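(* Fix an integer $d\ge1$ and $n\ge3$. For every $x\neq0$ with $\theta=\theta(x)\in(0,\pi)$, writing $r=\|x\|$ and $\theta_d=g^{\circ d}(\theta)$, $$\Delta L(x)\le\begin{cases}2+(n-2)\dfrac{r-\cos\theta_d}{r}, & \theta\ge\pi/2,\\[2mm] n, & \theta\le\pi/2.\end{cases}$$
   Context: $e_1=(1,0,\dots,0)\in\mathbb{R}^n$; for $x\neq0$, $\theta(x)\in[0,\pi]$ is the angle between $x$ and $e_1$. $g(\theta)=\arccos\big(\frac{(\pi-\theta)\cos\theta+\sin\theta}{\pi}\big)$, $g^{\circ d}$ its $d$-fold composition. $L(x)=\frac12\|x\|^2-\|x\|\cos\big(g^{\circ d}(\theta(x))\big)+\frac12$; $\Delta$ is the Laplacian in $x$. *)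

(* Defs.v *)
From HB Require Import structures.
From mathcomp Require Import all_boot all_order all_algebra.
From mathcomp Require Import all_classical all_reals all_analysis.
Set Implicit Arguments. Unset Strict Implicit. Unset Printing Implicit Defensive.
Import Order.TTheory GRing.Theory Num.Theory.
Import numFieldNormedType.Exports.
Local Open Scope ring_scope.

Section Defs.
Variables (R : realType) (n : nat).

Definition dotv (x y : 'rV[R]_n) : R := \sum_(i < n) x ord0 i * y ord0 i.
Definition enorm (x : 'rV[R]_n) : R := Num.sqrt (dotv x x).

Definition e1 : 'rV[R]_n := \row_(i < n) (if nat_of_ord i == 0%N then 1 else 0).

Definition basis_vec (i : 'I_n) : 'rV[R]_n := \row_(j < n) (if j == i then 1 else 0).

Definition theta (x : 'rV[R]_n) : R := acos (dotv x e1 / enorm x).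

Definition laplacian (f : 'rV[R]_n -> R) (x : 'rV[R]_n) : R :=
  \sum_(i < n) derive (fun y => derive f y (basis_vec i)) x (basis_vec i).
End Defs.

Definition gmap {R : realType} (t : R) : R :=
  acos (((pi - t) * cos t + sin t) / pi).

Definition Lpot {R : realType} (n d : nat) (x : 'rV[R]_n) : R :=
  (enorm x) ^+ 2 / 2 - enorm x * cos (iter d gmap (theta x)) + 1 / 2.

(* Main.v *)
Require Import Defs.
From HB Require Import structures.
From mathcomp Require Import all_boot all_order all_algebra.
From mathcomp Require Import all_classical all_reals all_analysis.
From mathcomp Require Import ring lra.
Import Order.TTheory GRing.Theory Num.Theory.
Import numFieldNormedType.Exports.
Local Open Scope ring_scope.

Set Implicit Arguments. Unset Strict Implicit.
Local Open Scope classical_set_scope.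
Local Open Scope ring_scope.


Section H.
Variable R : realType.
Implicit Types (f g : R -> R) (x a b : R).

Lemma deq f x a b : is_derive x 1 f a -> a = b -> is_derive x 1 f b.
Proof. by move=> H <-. Qed.

Lemma dD f g x a b : is_derive x 1 f a -> is_derive x 1 g b ->
  is_derive x 1 (fun t => f t + g t) (a + b).
Proof. by move=> H1 H2; have := is_deriveD H1 H2. Qed.

Lemma dB f g x a b : is_derive x 1 f a -> is_derive x 1 g b ->
  is_derive x 1 (fun t => f t - g t) (a - b).
Proof. by move=> H1 H2; have := is_deriveB H1 H2. Qed.

Lemma dM f g x a b : is_derive x 1 f a -> is_derive x 1 g b ->
  is_derive x 1 (fun t => f t * g t) (a * g x + f x * b).
Proof.
move=> H1 H2; have := is_deriveM H1 H2.
by rewrite /GRing.scale /= addrC (mulrC (g x)).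
Qed.

Lemma dC x (c : R) : is_derive x 1 (fun _ => c) 0.
Proof. exact: is_derive_cst. Qed.

Lemma dI x : is_derive x 1 (fun t : R => t) 1.
Proof. exact: is_derive_id. Qed.

Lemma dV f x a : f x != 0 -> is_derive x 1 f a ->
  is_derive x 1 (fun t => (f t)^-1) (- a / (f x)^+2).
Proof.
move=> H1 H2; apply: deq (is_deriveV H1 H2) _.
by rewrite /GRing.scale /= mulrC mulNr mulrN.
Qed.

Lemma dcomp f g x a b : is_derive (g x) 1 f a -> is_derive x 1 g b ->
  is_derive x 1 (fun t => f (g t)) (a * b).
Proof. move=> H1 H2; exact: (is_derive1_comp H1 H2). Qed.

Lemma dsqrt x : 0 < x -> is_derive x 1 (@Num.sqrt R) (2 * Num.sqrt x)^-1.
Proof. exact: is_derive1_sqrt. Qed.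

Lemma dacos x : -1 < x < 1 -> is_derive x 1 (@acos R) (- (Num.sqrt (1 - x ^+ 2))^-1).
Proof. exact: is_derive1_acos. Qed.

Lemma dsin x : is_derive x 1 (@sin R) (cos x).
Proof. exact: is_derive_sin. Qed.
Lemma dcos x : is_derive x 1 (@cos R) (- sin x).
Proof. exact: is_derive_cos. Qed.

End H.


Section T.
Variable R : realType.
Implicit Types (f g : R -> R) (x a b : R).

Lemma der_cont f df : (forall x, is_derive x 1 f (df x)) -> continuous f.
Proof.
move=> H x; apply: differentiable_continuous; apply/derivable1_diffP.
by case: (H x).
Qed.

Lemma mvt_ge0 f df b : 0 <= b -> (forall x, is_derive x 1 f (df x)) ->
  (forall x, 0 < x < b -> 0 <= df x) -> f 0 <= f b.
Proof.
move=> hb H hd; case: (eqVneq b 0) => [->|bn0]; first by [].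
have b0 : 0 < b by rewrite lt_neqAle eq_sym bn0.
have [c hc E] := MVT b0 (fun x _ => H x) (continuous_subspaceT (@der_cont f df H)).
rewrite -subr_ge0 E subr0 mulr_ge0 ?subr_ge0 //.
by apply: hd; move: hc; rewrite in_itv.
Qed.

Lemma tcos_le_sin (t : R) : 0 <= t <= pi -> t * cos t <= sin t.
Proof.
case/andP=> t0 tp.
have := @mvt_ge0 (fun t => sin t - t * cos t) (fun t => t * sin t) t t0.
rewrite sin0 mul0r subr0 subr_ge0; apply.
  move=> x; eapply deq; first by eapply dB; [apply: dsin| eapply dM; [apply: dI|apply: dcos]].
  by rewrite /=; ring.
move=> x /andP[x0 xt]; apply: mulr_ge0; first exact: ltW.
apply: sin_ge0_pi; rewrite (ltW x0) /=.
exact: (ltW (lt_le_trans xt tp)).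
Qed.

Lemma sin_le_t (t : R) : 0 <= t -> sin t <= t.
Proof.
move=> t0.
have := @mvt_ge0 (fun t => t - sin t) (fun t => 1 - cos t) t t0.
rewrite sin0 subr0 subr_ge0; apply.
by move=> x _; rewrite subr_ge0 cos_le1.
Qed.

End T.


Section K.
Variable R : realType.

Definition kk (s : R) := (s * (pi - acos s) + Num.sqrt (1 - s * s)) * pi^-1.
Definition k1 (s : R) := 1 - acos s * pi^-1.
Definition k2 (s : R) := (Num.sqrt (1 - s * s))^-1 * pi^-1.

Lemma pi_neq0 : (pi : R) != 0.
Proof. by rewrite gt_eqF // pi_gt0. Qed.

Lemma sq_lt1 (s : R) : -1 < s < 1 -> 0 < 1 - s * s.
Proof. case/andP=> h1 h2; rewrite subr_gt0; nra. Qed.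

Lemma dkk (s : R) : -1 < s < 1 -> is_derive s 1 kk (k1 s).
Proof.
move=> hs; have hq := sq_lt1 hs.
have hsq : 0 < Num.sqrt (1 - s * s) by rewrite sqrtr_gt0.
rewrite /kk; eapply deq.
  eapply dM; last exact: dC.
  eapply dD.
    eapply dM; first exact: dI.
    eapply dB; first exact: dC.
    exact: dacos.
  eapply dcomp; first exact: dsqrt.
  eapply dB; first exact: dC.
  eapply dM; exact: dI.
rewrite /k1 /=.
have -> : 1 - s ^+ 2 = 1 - s * s by rewrite expr2.
move: (@pi_gt0 R); move: (pi : R) => P hP.
field; by rewrite !gt_eqF.
Qed.

Lemma dk1 (s : R) : -1 < s < 1 -> is_derive s 1 k1 (k2 s).
Proof.
move=> hs; have hq := sq_lt1 hs.
have hsq : 0 < Num.sqrt (1 - s * s) by rewrite sqrtr_gt0.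
rewrite /k1; eapply deq.
  eapply dB; first exact: dC.
  eapply dM; last exact: dC.
  exact: dacos.
rewrite /k2 /=.
have -> : 1 - s ^+ 2 = 1 - s * s by rewrite expr2.
move: (@pi_gt0 R); move: (pi : R) => P hP.
field; by rewrite !gt_eqF.
Qed.

Lemma kk_trig (s : R) : -1 <= s <= 1 ->
  kk s = ((pi - acos s) * cos (acos s) + sin (acos s)) * pi^-1.
Proof.
move=> hs; rewrite /kk acosK ?in_itv //= sin_acos // expr2.
by congr (_ * _); ring.
Qed.

Lemma cos_pimin (u : R) : cos (pi - u) = - cos u.
Proof. by rewrite cosB cospi sinpi; ring. Qed.
Lemma sin_pimin (u : R) : sin (pi - u) = sin u.
Proof. by rewrite sinB cospi sinpi; ring. Qed.

Lemma acos_rng (s : R) : -1 <= s <= 1 -> 0 <= acos s <= pi.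
Proof. by move=> hs; rewrite acos_ge0 // acos_lepi. Qed.

Lemma kk_ge0 (s : R) : -1 <= s <= 1 -> 0 <= kk s.
Proof.
move=> hs; rewrite kk_trig //; apply: mulr_ge0; last by rewrite invr_ge0 pi_ge0.
have /andP[t0 tp] := acos_rng hs.
move: (acos s) t0 tp => t t0 tp.
pose u := pi - t.
have hu : 0 <= u <= pi by rewrite /u; apply/andP; split; lra.
have -> : t = pi - u by rewrite /u; ring.
rewrite cos_pimin sin_pimin.
have -> : pi - (pi - u) = u by ring.
have := tcos_le_sin hu; rewrite mulrN; lra.
Qed.

Lemma kk_ge (s : R) : -1 <= s <= 1 -> s <= kk s.
Proof.
move=> hs; rewrite kk_trig //.
have hpi := @pi_gt0 R.
have /andP[t0 tp] := acos_rng hs.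
have hc := acosK hs.
rewrite -{1}(acosK (_ : s \in `[-1, 1])); last by rewrite in_itv.
move: (acos s) t0 tp hc => t t0 tp hc.
have := tcos_le_sin (_ : 0 <= t <= pi); rewrite t0 tp => /(_ isT) h.
rewrite -subr_ge0.
have -> : ((pi - t) * cos t + sin t) * pi^-1 - cos t = (sin t - t * cos t) / pi.
  by move: hpi; move: (pi : R) => P hP; field; rewrite gt_eqF.
by apply: divr_ge0; lra.
Qed.

Lemma kk_lt1 (s : R) : -1 < s < 1 -> kk s < 1.
Proof.
move=> hs; have hs' : -1 <= s <= 1 by case/andP: hs => a b; rewrite !ltW.
rewrite kk_trig //.
have hpi := @pi_gt0 R.
have t0 : 0 < acos s by apply: acos_gt0; case/andP: hs => a b; rewrite b ltW.
have tp : acos s < pi by apply: acos_ltpi; case/andP: hs => a b; rewrite a ltW.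
have hc := acosK hs'.
have hs1 : cos (acos s) < 1 by rewrite hc; case/andP: hs.
move: (acos s) t0 tp hs1 => t t0 tp hs1.
have h := sin_le_t (ltW t0).
rewrite ltr_pdivrMr // mul1r.
have : (pi - t) * cos t < (pi - t) * 1 by rewrite ltr_pM2l // subr_gt0.
lra.
Qed.

Lemma k1_rng (s : R) : -1 <= s <= 1 -> 0 <= k1 s <= 1.
Proof.
move=> hs; have /andP[t0 tp] := acos_rng hs.
have hpi := @pi_gt0 R.
rewrite /k1; apply/andP; split.
  rewrite subr_ge0 ler_pdivrMr // mul1r //.
rewrite lerBlDr lerDl; apply: mulr_ge0 => //; rewrite invr_ge0 ltW //.
Qed.

Lemma k2_ge0 (s : R) : 0 <= k2 s.
Proof.
by rewrite /k2 mulr_ge0 // invr_ge0 ?sqrtr_ge0 // pi_ge0.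
Qed.

End K.



Section P.
Variable R : realType.

Fixpoint psi1 (d : nat) (s : R) : R := match d with
  | 0 => 1 | d'.+1 => k1 (iter d' (@kk R) s) * psi1 d' s end.
Fixpoint psi2 (d : nat) (s : R) : R := match d with
  | 0 => 0 | d'.+1 => k2 (iter d' (@kk R) s) * (psi1 d' s * psi1 d' s)
      + k1 (iter d' (@kk R) s) * psi2 d' s end.

Lemma psi_props d (s : R) : -1 < s < 1 ->
  [/\ -1 < iter d (@kk R) s < 1, s <= iter d (@kk R) s,
      is_derive s 1 (iter d (@kk R)) (psi1 d s),
      is_derive s 1 (psi1 d) (psi2 d s) &
      (0 <= psi1 d s <= 1) /\ 0 <= psi2 d s].
Proof.
move=> hs; elim: d => [|d [r1 r2 D1 D2 [b1 b2]]].
  split => //=; [exact: dI | exact: dC | by rewrite ler01 lexx].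
have r1' : -1 <= iter d (@kk R) s <= 1 by case/andP: r1 => a b; rewrite !ltW.
split.
- rewrite /= kk_lt1 // andbT; apply: (lt_le_trans _ (kk_ge0 r1')).
  by rewrite ltrN10.
- exact: le_trans r2 (kk_ge r1').
- change (is_derive s 1 (fun s => kk (iter d (@kk R) s)) (k1 (iter d (@kk R) s) * psi1 d s)).
  eapply dcomp; [exact: dkk | exact: D1].
- change (is_derive s 1 (fun s => k1 (iter d (@kk R) s) * psi1 d s) (psi2 d.+1 s)).
  eapply deq.
    eapply dM; last exact: D2.
    eapply dcomp; [exact: dk1 | exact: D1].
  by rewrite /=; ring.
- have /andP[c1 c2] := k1_rng r1'.
  have /andP[e1 e2] := b1.
  split.
    rewrite /= mulr_ge0 //=.
    by rewrite -[1]mul1r ler_pM.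
  rewrite /= addr_ge0 // mulr_ge0 // ?k2_ge0 // mulr_ge0 //.
Qed.

Lemma psi_ge0 d (s : R) : -1 < s < 1 -> 0 <= iter d.+1 (@kk R) s.
Proof.
move=> hs; have [/andP[a b] _ _ _ _] := psi_props d hs.
by rewrite /= kk_ge0 // !ltW.
Qed.

End P.


Section L.
Variable R : realType.

Lemma kk_le1 (c : R) : -1 <= c <= 1 -> kk c <= 1.
Proof.
move=> hc; case: (eqVneq c 1) => [->|c1].
  rewrite /kk acos1 !mul1r subr0 subrr sqrtr0 addr0 divff //.
  by rewrite gt_eqF // pi_gt0.
case: (eqVneq c (-1)) => [->|c2].
  by rewrite /kk acosN1 subrr mulr0 mulrN1 opprK subrr sqrtr0 addr0 mul0r ler01.
apply/ltW/kk_lt1; case/andP: hc => a b.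
by rewrite !lt_neqAle a b eq_sym c2 c1.
Qed.

Lemma link d (s : R) : -1 <= s <= 1 ->
  0 <= iter d gmap (acos s) <= pi /\ cos (iter d gmap (acos s)) = iter d (@kk R) s.
Proof.
move=> hs; elim: d => [|d [hT hcT]].
  by split; [exact: acos_rng | exact: acosK].
set T := iter d gmap (acos s) in hT hcT *.
have hc : -1 <= cos T <= 1 by rewrite cos_geN1 cos_le1.
have E : ((pi - T) * cos T + sin T) / pi = kk (cos T).
  by rewrite kk_trig // cosK // in_itv.
have hX : -1 <= kk (cos T) <= 1.
  rewrite kk_le1 // andbT; apply: le_trans (kk_ge0 hc).
  by rewrite lerN10.
rewrite /= -/T /gmap E; split; first exact: acos_rng.
by rewrite acosK ?in_itv // hcT.
Qed.

End L.


Section G.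
Variable R : realType.
Variables (r a u dl : R).
Hypothesis hr : 0 < r.

Definition qq (t : R) := r * r + 2 * a * t + t * t.
Definition NN (t : R) := Num.sqrt (qq t).
Definition N1 (t : R) := (a + t) / NN t.
Definition N2 (t : R) := (NN t - (a + t) * N1 t) / (NN t ^+ 2).
Definition SS (t : R) := (u + t * dl) / NN t.
Definition S1 (t : R) := (dl * NN t - (u + t * dl) * N1 t) / (NN t ^+ 2).
Definition S2 (t : R) := (- (u + t * dl) * N2 t * NN t ^+ 2
   - (dl * NN t - (u + t * dl) * N1 t) * (2 * NN t * N1 t)) / (NN t ^+ 4).

Lemma dqq (t : R) : is_derive t 1 qq (2 * a + 2 * t).
Proof.
rewrite /qq; eapply deq.
  eapply dD; last by eapply dM; exact: dI.
  eapply dD; first exact: dC.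
  eapply dM; [exact: dC| exact: dI].
by rewrite /=; ring.
Qed.

Lemma dNN (t : R) : 0 < qq t -> is_derive t 1 NN (N1 t).
Proof.
move=> hq; have hN : 0 < NN t by rewrite sqrtr_gt0.
rewrite /NN; eapply deq.
  eapply dcomp; [exact: dsqrt | exact: dqq].
rewrite /N1 /NN; move: hN; rewrite /NN; move: (Num.sqrt (qq t)) => N hN.
by field; rewrite gt_eqF.
Qed.

Lemma dN1 (t : R) : 0 < qq t -> is_derive t 1 N1 (N2 t).
Proof.
move=> hq; have hN : 0 < NN t by rewrite sqrtr_gt0.
rewrite /N1; eapply deq.
  eapply dM; first by eapply dD; [exact: dC| exact: dI].
  eapply dV; [by rewrite gt_eqF | exact: dNN].
rewrite /N2 /N1; move: hN; move: (NN t) => N hN.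
by field; rewrite gt_eqF.
Qed.

Lemma dSS (t : R) : 0 < qq t -> is_derive t 1 SS (S1 t).
Proof.
move=> hq; have hN : 0 < NN t by rewrite sqrtr_gt0.
rewrite /SS; eapply deq.
  eapply dM; first by eapply dD; [exact: dC| eapply dM; [exact: dI | exact: dC]].
  eapply dV; [by rewrite gt_eqF | exact: dNN].
rewrite /S1; move: hN; move: (NN t) (N1 t) => N M hN.
by field; rewrite gt_eqF.
Qed.

Lemma dS1 (t : R) : 0 < qq t -> is_derive t 1 S1 (S2 t).
Proof.
move=> hq; have hN : 0 < NN t by rewrite sqrtr_gt0.
rewrite /S1; eapply deq.
  eapply dM.
    eapply dB.
      eapply dM; [exact: dC | exact: dNN].
    eapply dM; last exact: dN1.
    eapply dD; [exact: dC | eapply dM; [exact: dI | exact: dC]].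
  eapply dV; first by rewrite expf_neq0 // gt_eqF.
  eapply deq; first by eapply dM; exact: dNN.
  reflexivity.
rewrite /S2 /=; move: hN; move: (NN t) (N1 t) (N2 t) => N M P hN.
by field; rewrite gt_eqF.
Qed.

Variables f f1 f2 : R -> R.
Hypothesis hf1 : forall s : R, -1 < s < 1 -> is_derive s 1 f (f1 s).
Hypothesis hf2 : forall s : R, -1 < s < 1 -> is_derive s 1 f1 (f2 s).
Hypothesis hs : -1 < u / r < 1.

Definition GG (t : R) := qq t / 2 - NN t * f (SS t) + 1 / 2.
Definition GG1 (t : R) := a + t - (N1 t * f (SS t) + NN t * (f1 (SS t) * S1 t)).

Lemma dGG (t : R) : 0 < qq t -> -1 < SS t < 1 -> is_derive t 1 GG (GG1 t).
Proof.
move=> hq hS; rewrite /GG; eapply deq.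
  eapply dD; last exact: dC.
  eapply dB.
    eapply dM; [exact: dqq | exact: dC].
  eapply dM; first exact: dNN.
  eapply dcomp; [exact: hf1 | exact: dSS].
by rewrite /GG1 /=; field.
Qed.

Lemma qq0 : qq 0 = r * r.
Proof. by rewrite /qq; ring. Qed.
Lemma NN0 : NN 0 = r.
Proof. by rewrite /NN qq0 -expr2 sqrtr_sqr gtr0_norm. Qed.
Lemma qq0_gt0 : 0 < qq 0.
Proof. by rewrite qq0 mulr_gt0. Qed.
Lemma SS0 : SS 0 = u / r.
Proof. by rewrite /SS NN0 mul0r addr0. Qed.

Lemma dGG1 : is_derive (0:R) 1 GG1
  (1 - (N2 0 * f (SS 0) + N1 0 * (f1 (SS 0) * S1 0)
        + (N1 0 * (f1 (SS 0) * S1 0) + NN 0 * (f2 (SS 0) * S1 0 * S1 0 + f1 (SS 0) * S2 0)))).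
Proof.
have hq := qq0_gt0.
have hS : -1 < SS 0 < 1 by rewrite SS0.
rewrite /GG1; eapply deq.
  eapply dB.
    eapply dD; [exact: dC | exact: dI].
  eapply dD.
    eapply dM; first exact: dN1.
    eapply dcomp; [exact: hf1 | exact: dSS].
  eapply dM; first exact: dNN.
  eapply dM; last exact: dS1.
  eapply dcomp; [exact: hf2 | exact: dSS].
by rewrite /=; ring.
Qed.

Lemma near_good : \forall t \near 0, 0 < qq t /\ -1 < SS t < 1.
Proof.
have hq := qq0_gt0.
have cq : qq @ 0 --> qq 0.
  apply: differentiable_continuous; apply/derivable1_diffP.
  by case: (dqq 0).
have cS : SS @ 0 --> SS 0.
  apply: differentiable_continuous; apply/derivable1_diffP.
  by case: (dSS hq).
have h1 := @cvgr_gt _ _ _ (nbhs_filter _) _ _ cq _ hq.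
have /andP[s1 s2] := hs; rewrite -SS0 in s1 s2.
have h2 := @cvgr_gt _ _ _ (nbhs_filter _) _ _ cS _ s1.
have h3 := @cvgr_lt _ _ _ (nbhs_filter _) _ _ cS _ s2.
have H := @filterI _ _ (nbhs_filter _) _ _ h1 (@filterI _ _ (nbhs_filter _) _ _ h2 h3).
apply: (@filterS _ _ (nbhs_filter _) _ _ _ H) => t [a1 [a2 a3]].
by split => //; rewrite a2 a3.
Qed.

Lemma second_deriv : derive1 (derive1 GG) 0 =
  1 - ((r^-1 - a * a / (r ^+ 3)) * f (u / r)
       + (u * (a * a) / (r ^+ 4) - u / (r * r)) * f1 (u / r)
       + ((dl * (r * r) - u * a) ^+ 2 / (r ^+ 5)) * f2 (u / r)).
Proof.
have E : derive1 (derive1 GG) 0 = derive1 GG1 0.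
  rewrite !derive1E; apply: near_eq_derive.
  apply: (@filterS _ _ (nbhs_filter _) _ _ _ near_good) => t [h1 h2].
  by rewrite derive1E; case: (dGG h1 h2).
rewrite E derive1E; case: dGG1 => _ ->.
rewrite SS0 /S2 /S1 /N2 /N1 NN0.
have hr0 : r != 0 by rewrite gt_eqF.
rewrite !mul0r !addr0.
move: (f (u / r)) (f1 (u / r)) (f2 (u / r)) => F0 F1 F2.
by field.
Qed.

End G.


Section V.
Variable R : realType.
Variable n : nat.
Implicit Types (x y : 'rV[R]_n).

Lemma sum_delta (F : 'I_n -> R) (i : 'I_n) :
  \sum_(j < n) F j * (if j == i then 1 else 0) = F i.
Proof.
rewrite (bigD1 i) //= eqxx mulr1 big1 ?addr0 // => j /negbTE ->.
by rewrite mulr0.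
Qed.

Lemma dotv_ge0 y : 0 <= dotv y y.
Proof. by rewrite /dotv sumr_ge0 // => i _; rewrite -expr2 sqr_ge0. Qed.

Lemma enorm_sq y : enorm y ^+ 2 = dotv y y.
Proof. by rewrite /enorm sqr_sqrtr // dotv_ge0. Qed.

Lemma dotv_e1 y (i0 : 'I_n) : nat_of_ord i0 = 0%N -> dotv y (e1 R n) = y ord0 i0.
Proof.
move=> h0; rewrite /dotv.
have -> : \sum_(i < n) y ord0 i * e1 R n ord0 i
   = \sum_(i < n) y ord0 i * (if i == i0 then 1 else 0).
  apply: eq_bigr => i _; rewrite /e1 mxE; congr (_ * _).
  have -> : (nat_of_ord i == 0%N) = (i == i0) by rewrite -h0.
  by [].
by rewrite sum_delta.
Qed.

Lemma coord_le y (i0 : 'I_n) : y ord0 i0 * y ord0 i0 <= dotv y y.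
Proof.
rewrite /dotv (bigD1 i0) //= lerDl sumr_ge0 // => i _.
by rewrite -expr2 sqr_ge0.
Qed.

Lemma coord_abs y (i0 : 'I_n) : `|y ord0 i0| <= enorm y.
Proof.
rewrite /enorm -sqrtr_sqr ler_sqrt ?expr2 ?coord_le //.
by rewrite dotv_ge0.
Qed.

Lemma dotv_line x (i : 'I_n) (t : R) :
  dotv (x + t *: basis_vec R i) (x + t *: basis_vec R i)
  = dotv x x + 2 * x ord0 i * t + t * t.
Proof.
rewrite /dotv.
have -> : \sum_(j < n) (x + t *: basis_vec R i) ord0 j * (x + t *: basis_vec R i) ord0 j
  = \sum_(j < n) (x ord0 j * x ord0 j + (2 * x ord0 j * t + t * t) * (if j == i then 1 else 0)).
  apply: eq_bigr => j _; rewrite !mxE.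
  by case: (j == i); ring.
by rewrite big_split /= sum_delta addrA.
Qed.

Lemma coord_line x (i i0 : 'I_n) (t : R) :
  (x + t *: basis_vec R i) ord0 i0 = x ord0 i0 + t * (if i == i0 then 1 else 0).
Proof. by rewrite !mxE eq_sym. Qed.

Lemma LpotE d y (i0 : 'I_n) : nat_of_ord i0 = 0%N ->
  Lpot d y = dotv y y / 2 - enorm y * iter d (@kk R) (y ord0 i0 / enorm y) + 1 / 2.
Proof.
move=> h0; rewrite /Lpot /theta enorm_sq (dotv_e1 _ h0).
case: (eqVneq (enorm y) 0) => [->|hne]; first by rewrite !mul0r.
have hpos : 0 < enorm y by rewrite lt_neqAle eq_sym hne /enorm sqrtr_ge0.
have hs : -1 <= y ord0 i0 / enorm y <= 1.
  rewrite -ler_norml normrM normfV (gtr0_norm hpos) ler_pdivrMr // mul1r.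
  exact: coord_abs.
by have [_ ->] := link d hs.
Qed.

Lemma dir1 (f : 'rV[R]_n -> R) a v : derive f a v = derive1 (fun t => f (a + t *: v)) 0.
Proof.
rewrite /derive /derive1; set D := (fun _ : R => _); set D' := (fun _ : R => _).
suff -> : D = D' by [].
apply: funext => h; rewrite /D /D' /=.
by rewrite addr0 scale0r addr0 (addrC a).
Qed.

Lemma shift1 (G : R -> R) t : derive1 (fun s => G (t + s)) 0 = derive1 G t.
Proof.
rewrite /derive1; set D := (fun _ : R => _); set D' := (fun _ : R => _).
suff -> : D = D' by [].
apply: funext => h; rewrite /D /D' /=.
by rewrite !addr0 (addrC t).
Qed.

Lemma dir2 (f : 'rV[R]_n -> R) a v :
  derive (fun y => derive f y v) a v = derive1 (derive1 (fun t => f (a + t *: v))) 0.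
Proof.
rewrite (dir1 (fun y => derive f y v) a v).
suff -> : (fun t : R => derive f (a + t *: v) v) = derive1 (fun t : R => f (a + t *: v)) by [].
apply: funext => t.
rewrite (dir1 f (a + t *: v) v) -(shift1 (fun t : R => f (a + t *: v)) t).
suff -> : (fun s : R => f (a + t *: v + s *: v)) = (fun s : R => f (a + (t + s) *: v)) by [].
by apply: funext => s; rewrite scalerDl addrA.
Qed.

End V.


Lemma lap_formula (R : realType) (d n : nat) (x : 'rV[R]_n) (i0 : 'I_n)
  (h0 : nat_of_ord i0 = 0%N) (hr : 0 < enorm x)
  (hs : -1 < x ord0 i0 / enorm x < 1) :
  let r := enorm x in let u := x ord0 i0 in let s := u / r in
  laplacian (Lpot d) x =
  \sum_(i < n) (1 - ((r^-1 - x ord0 i * x ord0 i / r ^+ 3) * iter d (@kk R) s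
     + (u * (x ord0 i * x ord0 i) / r ^+ 4 - u / (r * r)) * psi1 d s
     + ((if i == i0 then 1 else 0) * (r * r) - u * x ord0 i) ^+ 2 / r ^+ 5 * psi2 d s)).
Proof.
move=> r u s.
rewrite /laplacian; apply: eq_bigr => i _.
rewrite dir2.
have -> : (fun t : R => Lpot d (x + t *: basis_vec R i))
   = GG r (x ord0 i) u (if i == i0 then 1 else 0) (iter d (@kk R)).
  apply: funext => t.
  rewrite (LpotE d _ h0) dotv_line coord_line /GG /qq /NN /SS.
  have -> : dotv x x = r * r by rewrite -enorm_sq expr2.
  have E : enorm (x + t *: basis_vec R i) = NN r (x ord0 i) t.
    by rewrite /enorm dotv_line /NN /qq -enorm_sq expr2.
  by rewrite E /NN.
apply: second_deriv => //.
- by move=> s' hs'; case: (psi_props d hs').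
- by move=> s' hs'; case: (psi_props d hs').
Qed.

Lemma sum_formula (R : realType) (n : nat) (x : 'rV[R]_n) (i0 : 'I_n) (r u F F1 F2 : R)
  (hr : 0 < r) (hxx : dotv x x = r * r) (hu : x ord0 i0 = u) :
  \sum_(i < n) (1 - ((r^-1 - x ord0 i * x ord0 i / r ^+ 3) * F
     + (u * (x ord0 i * x ord0 i) / r ^+ 4 - u / (r * r)) * F1
     + ((if i == i0 then 1 else 0) * (r * r) - u * x ord0 i) ^+ 2 / r ^+ 5 * F2))
  = n%:R * (1 - F / r + u * F1 / (r * r))
    + r * r * (F / r ^+ 3 - u * F1 / r ^+ 4 - u * u * F2 / r ^+ 5)
    - (r * r * r * r - 2 * (r * r) * u * u) * F2 / r ^+ 5.
Proof.
have hr0 : r != 0 by rewrite gt_eqF.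
have -> : \sum_(i < n) (1 - ((r^-1 - x ord0 i * x ord0 i / r ^+ 3) * F
     + (u * (x ord0 i * x ord0 i) / r ^+ 4 - u / (r * r)) * F1
     + ((if i == i0 then 1 else 0) * (r * r) - u * x ord0 i) ^+ 2 / r ^+ 5 * F2))
  = \sum_(i < n) ((1 - F / r + u * F1 / (r * r))
     + x ord0 i * x ord0 i * (F / r ^+ 3 - u * F1 / r ^+ 4 - u * u * F2 / r ^+ 5)
     - ((r * r * r * r - 2 * (r * r) * u * x ord0 i) * F2 / r ^+ 5) * (if i == i0 then 1 else 0)).
  apply: eq_bigr => i _; case: (i == i0).
    by field.
  by field.
rewrite big_split /= big_split /= sumrN sum_delta hu -mulr_suml.
rewrite sumr_const card_ord.
rewrite /dotv in hxx; rewrite hxx; congr (_ - _); congr (_ + _); by rewrite mulr_natl.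
Qed.

Unset Implicit Arguments.
Local Close Scope classical_set_scope.
Local Open Scope ring_scope.

Theorem mainTheorem7 (R : realType) (d n : nat) (hd : (1 <= d)%N) (hn : (3 <= n)%N)
  (x : 'rV[R]_n) (hx : x != 0)
  (hth : 0 < theta x < pi) :
  (pi / 2 <= theta x ->
     laplacian (Lpot d) x
       <= 2 + (n - 2)%:R * ((enorm x - cos (iter d gmap (theta x))) / enorm x)) /\
  (theta x <= pi / 2 -> laplacian (Lpot d) x <= n%:R).
Proof.
have n0 : (0 < n)%N by apply: leq_trans hn.
pose i0 := Ordinal n0.
have h0 : nat_of_ord i0 = 0%N by [].
have hxx : dotv x x = enorm x * enorm x by rewrite -enorm_sq expr2.
have hr : 0 < enorm x.
  rewrite /enorm sqrtr_gt0 lt_neqAle dotv_ge0 andbT eq_sym.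
  apply/negP => /eqP h; move/negP: hx; apply; apply/eqP/rowP => j.
  have Hp : forall i : 'I_n, true -> 0 <= x ord0 i * x ord0 i.
    by move=> i _; rewrite -expr2 sqr_ge0.
  have := @psumr_eq0P _ _ (fun _ => true) (fun i => x ord0 i * x ord0 i) Hp h j isT.
  by move/eqP; rewrite mulf_eq0 orbb mxE => /eqP ->.
move: hxx hr; set r := enorm x => hxx hr.
set u := x ord0 i0.
set s := u / r.
have hth' : theta x = acos s by rewrite /theta (dotv_e1 _ h0).
have hsc : -1 <= s <= 1.
  rewrite -ler_norml /s normrM normfV (gtr0_norm hr) ler_pdivrMr // mul1r.
  exact: coord_abs.
have hs : -1 < s < 1.
  case/andP: hsc => a b; rewrite !lt_neqAle a b !andbT.
  apply/andP; split; apply/negP => /eqP E; move: hth; rewrite hth'.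
    by rewrite -E acosN1 ltxx andbF.
  by rewrite E acos1 ltxx.
have [_ hcos] := link d hsc.
rewrite hth' hcos.
rewrite (@lap_formula R d n x i0 h0 hr hs) -/r -/u -/s.
rewrite (@sum_formula R n x i0 r u (iter d (@kk R) s) (psi1 d s) (psi2 d s) hr hxx erefl).
have hF : 0 <= iter d (@kk R) s.
  by case: d hd {hcos} => // d' _; exact: psi_ge0.
have [_ hs2 _ _ [/andP[p1 p1'] p2]] := psi_props d hs.
have hu : u = s * r by rewrite /s divfK // gt_eqF.
rewrite hu.
move: (iter d (@kk R) s) (psi1 d s) (psi2 d s) hF hs2 p1 p1' p2 => F F1 F2 hF hs2 p1 p1' p2.
have hr0 : r != 0 by rewrite gt_eqF.
have hN : (3 <= n)%N := hn.
have hN2 : (n - 2)%:R = n%:R - 2 :> R by rewrite natrB //; apply: leq_trans hn.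
have hN3 : 3 <= n%:R :> R by rewrite (ler_nat R 3 n).
move: hN3; rewrite hN2; move: (n%:R : R) => N hN3.
have hs1 : 0 <= 1 - s * s by case/andP: hs => a b; rewrite subr_ge0; nra.
split => hang.
- have s0 : s <= 0.
    have /andP[t0 tp] := acos_rng hsc.
    rewrite -(acosK hsc).
    have -> : acos s = pi - (pi - acos s) by ring.
    rewrite cos_pimin oppr_le0; apply: cos_ge0_pihalf.
    have hp := @pi_gt0 R.
    apply/andP; split; lra.
  rewrite -subr_ge0.
  have -> : 2 + (N - 2) * ((r - F) / r) -
     (N * (1 - F / r + s * r * F1 / (r * r)) +
      r * r * (F / r ^+ 3 - s * r * F1 / r ^+ 4 - s * r * (s * r) * F2 / r ^+ 5) -
      (r * r * r * r - 2 * (r * r) * (s * r) * (s * r)) * F2 / r ^+ 5)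
     = (F + (N - 1) * (- s) * F1 + (1 - s * s) * F2) / r.
    by field.
  apply: divr_ge0; last exact: ltW.
  apply: addr_ge0; last exact: mulr_ge0.
  apply: addr_ge0 => //; apply: mulr_ge0 => //; apply: mulr_ge0; last by rewrite oppr_ge0.
  by lra.
- have s0 : 0 <= s.
    have /andP[t0 tp] := acos_rng hsc.
    rewrite -(acosK hsc); apply: cos_ge0_pihalf.
    have hp := @pi_gt0 R.
    apply/andP; split; lra.
  rewrite -subr_ge0.
  have -> : N -
     (N * (1 - F / r + s * r * F1 / (r * r)) +
      r * r * (F / r ^+ 3 - s * r * F1 / r ^+ 4 - s * r * (s * r) * F2 / r ^+ 5) -
      (r * r * r * r - 2 * (r * r) * (s * r) * (s * r)) * F2 / r ^+ 5)
     = ((N - 1) * (F - s * F1) + (1 - s * s) * F2) / r.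
    by field.
  apply: divr_ge0; last exact: ltW.
  apply: addr_ge0; last exact: mulr_ge0.
  apply: mulr_ge0; first by lra.
  rewrite subr_ge0; apply: le_trans hs2.
  by rewrite -[X in _ <= X]mulr1 ler_pM.
Qed.
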